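(* Let $\mathcal{C}$ be a Cayley algebra over a field $\mathbb{F}$ with norm $\mathrm{n}$. Then every $2$-local automorphism of $\mathcal{C}$ is a linear map.
   Context: A Cayley (octonion) algebra over $\mathbb{F}$ is a unital nonassociative algebra $\mathcal{C}$ of dimension $8$ over $\mathbb{F}$ endowed with a quadratic form $\mathrm{n}:\mathcal{C}\to\mathbb{F}$ (the norm) such that $\mathrm{n}(xy)=\mathrm{n}(x)\mathrm{n}(y)$ for all $x,y$ and whose polar form $\mathrm{n}(x,y)=\mathrm{n}(x+y)-\mathrm{n}(x)-\mathrm{n}(y)$ is nondegenerate. A map $\Delta:\mathcal{C}\to\mathcal{C}$ (not assumed linear) is a $2$-local automorphism if for every pair $x,y\in\mathcal{C}$ there is an algebra automorphism $\varphi_{x,y}$ of $\mathcal{C}$ (depending on $x,y$) with $\Delta(x)=\varphi_{x,y}(x)$ and $\Delta(y)=\varphi_{x,y}(y)$. *)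

(* Defs.v *)
From HB Require Import structures.
From mathcomp Require Import all_boot all_order all_algebra.
Set Implicit Arguments. Unset Strict Implicit. Unset Printing Implicit Defensive.
Import GRing.Theory.
Local Open Scope ring_scope.

(* A (possibly nonassociative) unital algebra structure on the finite-dimensional
   F-vector space V is given by a multiplication [mul] and a unit [e]. *)

Definition bilinear_mul (F : fieldType) (V : vectType F) (mul : V -> V -> V) :=
  (forall (a : F) (x y z : V), mul (a *: x + y) z = a *: mul x z + mul y z) /\
  (forall (a : F) (x y z : V), mul z (a *: x + y) = a *: mul z x + mul z y).

Definition is_unit_elt (F : fieldType) (V : vectType F) (mul : V -> V -> V) (e : V) :=
  forall x, mul e x = x /\ mul x e = x.

Definition polar (F : fieldType) (V : vectType F) (n : V -> F) (x y : V) : F :=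
  n (x + y) - n x - n y.

Definition quadratic_form (F : fieldType) (V : vectType F) (n : V -> F) :=
  (forall (a : F) (x : V), n (a *: x) = a ^+ 2 * n x) /\
  (forall (a : F) (x y z : V), polar n (a *: x + y) z = a * polar n x z + polar n y z).

Definition nondegenerate (F : fieldType) (V : vectType F) (n : V -> F) :=
  forall x : V, (forall y : V, polar n x y = 0) -> x = 0.

Definition cayley_algebra (F : fieldType) (V : vectType F)
    (mul : V -> V -> V) (e : V) (n : V -> F) : Prop :=
  [/\ \dim (fullv : {vspace V}) = 8%N,
      bilinear_mul mul,
      is_unit_elt mul e,
      quadratic_form n
    & (forall x y, n (mul x y) = n x * n y) /\ nondegenerate n].

Definition linear_map (F : fieldType) (V : vectType F) (f : V -> V) :=
  forall (a : F) (x y : V), f (a *: x + y) = a *: f x + f y.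

Definition algebra_automorphism (F : fieldType) (V : vectType F)
    (mul : V -> V -> V) (e : V) (phi : V -> V) : Prop :=
  [/\ linear_map phi, bijective phi,
      (forall x y, phi (mul x y) = mul (phi x) (phi y)) & phi e = e].

Definition two_local_automorphism (F : fieldType) (V : vectType F)
    (mul : V -> V -> V) (e : V) (Delta : V -> V) : Prop :=
  forall x y : V, exists phi : V -> V,
    [/\ algebra_automorphism mul e phi, Delta x = phi x & Delta y = phi y].

(* Main.v *)
Require Import Defs.
From HB Require Import structures.
From mathcomp Require Import all_boot all_order all_algebra.
Local Open Scope ring_scope.
Import GRing.Theory.
Set Implicit Arguments. Unset Strict Implicit.

Section Q.
Variables (F : fieldType) (V : vectType F) (n : V -> F).

Lemma qn0 (hq : quadratic_form n) : n 0 = 0.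
Proof. by rewrite -(scale0r (0:V)) hq.1 expr0n mul0r. Qed.

Lemma polarD (hq : quadratic_form n) x y z :
  polar n (x + y) z = polar n x z + polar n y z.
Proof. by have := hq.2 1 x y z; rewrite scale1r mul1r. Qed.

Lemma polar0 (hq : quadratic_form n) z : polar n 0 z = 0.
Proof. by rewrite /polar add0r (qn0 hq) subr0 subrr. Qed.

Lemma polarZ (hq : quadratic_form n) a x z : polar n (a *: x) z = a * polar n x z.
Proof. by have := hq.2 a x 0 z; rewrite addr0 (polar0 hq) addr0. Qed.

Lemma polarN (hq : quadratic_form n) x z : polar n (- x) z = - polar n x z.
Proof. by rewrite -scaleN1r (polarZ hq) mulN1r. Qed.

Lemma polarB (hq : quadratic_form n) x y z :
  polar n (x - y) z = polar n x z - polar n y z.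
Proof. by rewrite (polarD hq) (polarN hq). Qed.

Lemma polarC x y : polar n x y = polar n y x.
Proof. by rewrite /polar [x + y]addrC addrAC. Qed.

Lemma polar_sum (hq : quadratic_form n) (I : Type) (r : seq I) (P : pred I)
   (c : I -> F) (x : I -> V) z :
  polar n (\sum_(i <- r | P i) c i *: x i) z = \sum_(i <- r | P i) c i * polar n (x i) z.
Proof.
apply: (big_ind2 (fun u s => polar n u z = s)).
- exact: polar0.
- by move=> u1 s1 u2 s2 <- <-; rewrite polarD.
- by move=> i _; rewrite polarZ.
Qed.

End Q.

From mathcomp Require Import ring.

Section A.
Variables (F : fieldType) (V : vectType F) (mul : V -> V -> V) (e : V) (n : V -> F).

Lemma polarDr (hq : quadratic_form n) x y z :
  polar n z (x + y) = polar n z x + polar n z y.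
Proof. by rewrite !(polarC n z) polarD. Qed.

Lemma mulDl (hb : bilinear_mul mul) x y z : mul (x + y) z = mul x z + mul y z.
Proof. by have := hb.1 1 x y z; rewrite !scale1r. Qed.

Lemma mulDr (hb : bilinear_mul mul) x y z : mul z (x + y) = mul z x + mul z y.
Proof. by have := hb.2 1 x y z; rewrite !scale1r. Qed.

Lemma mul0l (hb : bilinear_mul mul) z : mul 0 z = 0.
Proof.
have := mulDl hb 0 0 z; rewrite addr0 => h.
by apply: (addrI (mul 0 z)); rewrite addr0 -h.
Qed.

Lemma polar2 (hb : bilinear_mul mul) (hn : forall x y, n (mul x y) = n x * n y) x y z :
  polar n (mul x y) (mul x z) = n x * polar n y z.
Proof. by rewrite {1}/polar -mulDr // !hn /polar; ring. Qed.

Lemma polar4 (hq : quadratic_form n) (hb : bilinear_mul mul)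
  (hn : forall x y, n (mul x y) = n x * n y) x w y z :
  polar n (mul x y) (mul w z) + polar n (mul w y) (mul x z) = polar n x w * polar n y z.
Proof.
have := polar2 hb hn (x + w) y z.
rewrite !mulDl // !polarD // !polarDr // !polar2 //.
have -> : n (x + w) = polar n x w + n x + n w by rewrite /polar; ring.
move=> h.
have -> : polar n (mul x y) (mul w z) + polar n (mul w y) (mul x z) =
  n x * polar n y z + polar n (mul x y) (mul w z) +
        (polar n (mul w y) (mul x z) + n w * polar n y z)
  - n x * polar n y z - n w * polar n y z by ring.
rewrite h; ring.
Qed.

Lemma sq (hc : cayley_algebra mul e n) x :
  mul x x = polar n x e *: x - n x *: e.
Proof.
case: hc => _ hb hu hq [hn hnd].
apply/eqP; rewrite -subr_eq0; apply/eqP; apply: hnd => y.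
rewrite !polarB // !polarZ //.
have h4 := polar4 hq hb hn x e x y.
have h2 := polar2 hb hn x y e.
rewrite !(hu x).1 (hu y).1 (hu x).2 in h4 h2.
rewrite (polarC n x (mul x y)) h2 in h4.
have -> : polar n (mul x x) y = polar n x e * polar n x y - n x * polar n y e.
  by rewrite -h4; ring.
rewrite (polarC n e y); ring.
Qed.

Lemma lin0 (f : V -> V) : linear_map f -> f 0 = 0.
Proof.
move=> hl; have := hl 1 0 0; rewrite !scale1r addr0 => h.
by apply: (addrI (f 0)); rewrite addr0 -h.
Qed.

Lemma linD (f : V -> V) : linear_map f -> forall x y, f (x + y) = f x + f y.
Proof. by move=> hl x y; have := hl 1 x y; rewrite !scale1r. Qed.

Lemma linZ (f : V -> V) : linear_map f -> forall a x, f (a *: x) = a *: f x.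
Proof. by move=> hl a x; have := hl a x 0; rewrite !addr0 lin0 // addr0. Qed.

Lemma linB (f : V -> V) : linear_map f -> forall x y, f (x - y) = f x - f y.
Proof. by move=> hl x y; rewrite linD // -scaleN1r linZ // scaleN1r. Qed.

Lemma auto_n (hc : cayley_algebra mul e n) phi :
  algebra_automorphism mul e phi -> forall x, n (phi x) = n x.
Proof.
move=> [hl hbij hm he] x.
have hb : bilinear_mul mul by case: hc.
have hu : is_unit_elt mul e by case: hc.
set p := phi x.
have h1 : mul p p = polar n x e *: p - n x *: e.
  by rewrite -hm (sq hc) (linB hl) !(linZ hl) he.
rewrite sq // in h1.
have [ht|ht] := eqVneq (polar n p e) (polar n x e).
  rewrite ht in h1; move/addrI/oppr_inj/eqP: h1.
  rewrite -subr_eq0 -scalerBl scaler_eq0 subr_eq0 => /orP [/eqP //|/eqP e0].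
  have z (v : V) : v = 0 by rewrite -(hu v).1 e0 mul0l.
  by rewrite (z p) (z x).
have hk : (polar n x e - polar n p e) *: p = (n x - n p) *: e.
  apply/eqP; rewrite -subr_eq0; apply/eqP.
  have -> : (polar n x e - polar n p e) *: p - (n x - n p) *: e =
     (polar n x e *: p - n x *: e) - (polar n p e *: p - n p *: e).
    rewrite !scalerBl !opprB addrACA [RHS]addrACA; congr (_ + _).
    by rewrite addrC.
  by rewrite h1 subrr.
have nz : polar n x e - polar n p e != 0 by rewrite subr_eq0 eq_sym.
set k := (polar n x e - polar n p e)^-1 * (n x - n p).
have hp : p = k *: e by rewrite /k -scalerA -hk scalerA mulVf // scale1r.
have hx : x = k *: e.
  by apply: (bij_inj hbij); rewrite (linZ hl) he -hp.
by rewrite hp -hx.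
Qed.

Lemma delta_polar (hc : cayley_algebra mul e n) Delta :
  two_local_automorphism mul e Delta ->
  forall x y, polar n (Delta x) (Delta y) = polar n x y.
Proof.
move=> h2 x y; have [phi [ha -> ->]] := h2 x y.
have hl : linear_map phi by case: ha.
by rewrite /polar -(linD hl) !(auto_n hc ha).
Qed.

End A.

Require Import Defs.

Definition Sf (F : fieldType) (V : vectType F) (D : V -> V) (v : V) : V :=
  \sum_(i < \dim (fullv : {vspace V}))
     coord (vbasis fullv) i v *: D (vbasis (fullv : {vspace V}))`_i.

Lemma Sf_lin (F : fieldType) (V : vectType F) (D : V -> V) :
  linear_for *:%R (Sf D).
Proof.
move=> a x y; rewrite /Sf scaler_sumr -big_split; apply: eq_bigr => i _ /=.
by rewrite linearP /= scalerDl scalerA.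
Qed.

HB.instance Definition _ (F : fieldType) (V : vectType F) (D : V -> V) :=
  GRing.isLinear.Build F V V *:%R (Sf D) (Sf_lin D).

Theorem lemma4p1 (F : fieldType) (V : vectType F) (mul : V -> V -> V) (e : V)
    (n : V -> F) (Delta : V -> V) :
  cayley_algebra mul e n ->
  two_local_automorphism mul e Delta ->
  linear_map Delta.
Proof.
move=> hc h2.
have hq : quadratic_form n by case: hc.
have hnd : nondegenerate n by case: hc => _ _ _ _ [].
have key1 : forall x v, polar n (Delta x) (Sf Delta v) = polar n x v.
  move=> x v; rewrite [in RHS](coord_vbasis (memvf v)) /Sf polarC (polar_sum hq).
  rewrite [RHS]polarC (polar_sum hq); apply: eq_bigr => i _.
  by rewrite polarC (delta_polar hc h2) polarC.
have key2 : forall u v, polar n (Sf Delta u) (Sf Delta v) = polar n u v.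
  move=> u v; rewrite [in RHS](coord_vbasis (memvf u)) {1}/Sf (polar_sum hq).
  rewrite (polar_sum hq); apply: eq_bigr => i _.
  by rewrite key1.
pose f : 'End(V) := linfun (Sf Delta).
have fE : forall v, f v = Sf Delta v := lfunE _.
have inj : lker f == 0%VS.
  apply/lker0P => u w huw; apply/eqP; rewrite -subr_eq0; apply/eqP.
  apply: hnd => v.
  have : f (u - w) = 0 by rewrite (raddfB f); apply/eqP; rewrite subr_eq0; apply/eqP; exact: huw.
  rewrite fE => h0.
  by rewrite -key2 h0 (polar0 hq).
move=> a x y.
apply/eqP; rewrite -subr_eq0; apply/eqP; apply: hnd => u.
have : u \in limg f by rewrite lker0_limgf // memvf.
case/memv_imgP => v _ ->; rewrite fE.
by rewrite (polarB hq) (polarD hq) (polarZ hq) !key1 (polarD hq) (polarZ hq) subrr.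
Qed.
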